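(* Let $n \ge m$ be natural numbers and let $g(x)=a_m x^m + \dots + a_1 x + a_0$ be a polynomial with integer coefficients. Then \[ \sum_{k=0}^{n} g(k)\binom{n}{k}\, d(n-k) = \left(\sum_{i=0}^{m} a_i B_i\right) n!. \]
   Context: For a nonnegative integer $r$, $d(r)$ denotes the number of derangements of $\{1,\dots,r\}$ (permutations with no fixed point), with $d(0)=1$. $B_i$ denotes the $i$-th Bell number, the number of partitions of an $i$-element set into nonempty blocks, with $B_0=1$. *)

(* Defs.v *)
From mathcomp Require Import all_boot all_order all_algebra all_fingroup.
Set Implicit Arguments. Unset Strict Implicit. Unset Printing Implicit Defensive.
Import GRing.Theory Num.Theory.

Definition derange (r : nat) : nat :=
  #|[set s : 'S_r | [forall i : 'I_r, s i != i]]|.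

(* B_i: number of partitions of an i-element set ('I_i) into nonempty blocks
   (mathcomp's [partition] requires blocks to be nonempty). B_0 = 1. *)
Definition bell (i : nat) : nat :=
  #|[set P : {set {set 'I_i}} | partition P [set: 'I_i]]|.

(* Main.v *)
Require Import Defs.
From mathcomp Require Import all_boot all_order all_algebra all_fingroup.
Set Implicit Arguments. Unset Strict Implicit. Unset Printing Implicit Defensive.

Section Der.
Variable T : finType.
Definition der_on (A : {set T}) :=
  #|[set s : {perm T} | perm_on A s & [forall x in A, s x != x]]|.
Definition moved (s : {perm T}) : {set T} := [set x | s x != x].

Lemma fact_decomp (A : {set T}) : #|A|`! = \sum_(M : {set T} | M \subset A) der_on M.
Proof.
rewrite -card_perm -sum1_card.
rewrite (partition_big (fun s => moved s) (fun M => M \subset A)); last first.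
  by move=> s; rewrite /moved /perm_on => H; apply: subset_trans H; apply/subsetP=> x; rewrite inE.
apply: eq_bigr => M MA; rewrite sum1dep_card /der_on; apply: eq_card => s.
rewrite !inE /perm_on /moved.
apply/andP/andP => [[sA /eqP <-]|[sM /forall_inP dM]].
  split; first by apply/subsetP=> x; rewrite !inE.
  by apply/forall_inP => x; rewrite inE.
split; first exact: subset_trans sM MA.
rewrite eqEsubset; apply/andP; split.
  by apply: subset_trans sM; apply/subsetP=> x; rewrite !inE.
by apply/subsetP=> x /dM; rewrite inE.
Qed.

Lemma sum_subsets (A : {set T}) (F : nat -> nat) :
  \sum_(M : {set T} | M \subset A) F #|M| = \sum_(k < #|A|.+1) 'C(#|A|, k) * F k.
Proof.
rewrite (partition_big (fun M : {set T} => (inord #|M| : 'I_#|A|.+1)) predT) //=.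
apply: eq_bigr => k _.
have -> : \sum_(M : {set T} | (M \subset A) && (inord #|M| == k)) F #|M|
        = \sum_(M : {set T} | (M \subset A) && (#|M| == k)) F k.
  apply: eq_big => M.
    case MA: (M \subset A) => //=.
    have le : #|M| < #|A|.+1 by rewrite ltnS subset_leq_card.
    apply/eqP/eqP => [<-|H]; first by rewrite inordK.
    by apply: val_inj; rewrite /= inordK // H.
  case/andP => MA /eqP <-.
  have le : #|M| < #|A|.+1 by rewrite ltnS subset_leq_card.
  by rewrite inordK.
rewrite sum_nat_const -cards_draws; congr (_ * _).
by apply: eq_card => M; rewrite !inE.
Qed.

Definition G (r : nat) := \sum_(k < r) 'C(r, k) * derange k.

Lemma key (A : {set T}) :
  (forall M : {set T}, M \proper A -> der_on M = derange #|M|) ->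
  #|A|`! = der_on A + G #|A|.
Proof.
move=> IH; rewrite fact_decomp (bigD1 A) //=; congr (_ + _).
have : \sum_(M : {set T} | M \subset A) derange #|M| = derange #|A| + G #|A|.
  by rewrite sum_subsets big_ord_recr /= binn mul1n addnC.
rewrite (bigD1 A) //= => /addnI <-.
apply: eq_bigr => M /andP[MA MnA]; apply: IH.
by rewrite properEneq MnA MA.
Qed.
End Der.

Lemma derange_der r : derange r = der_on [set: 'I_r].
Proof.
rewrite /derange /der_on; apply: eq_card => s; rewrite !inE.
have -> : perm_on [set: 'I_r] s by apply/subsetP => x; rewrite inE.
rewrite /=.
apply/forallP/forall_inP => H x.
  by move=> _; apply: H.
by apply: H; rewrite inE.
Qed.

Lemma der_inv_aux r (T : finType) (A : {set T}) : #|A| < r -> der_on A = derange #|A|.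
Proof.
elim: r T A => [//|r IH] T A HA.
have H1 := key (fun M pM => IH _ M (leq_trans (proper_card pM) HA)).
have H2 : #|[set: 'I_#|A|]|`! = der_on [set: 'I_#|A|] + G #|[set: 'I_#|A|]|.
  apply: key => M pM; apply: IH.
  by apply: leq_trans (proper_card pM) _; rewrite cardsT card_ord.
rewrite cardsT card_ord -derange_der H1 in H2.
by apply/eqP; rewrite -(eqn_add2r (G #|A|)) H2.
Qed.

Lemma der_inv (T : finType) (A : {set T}) : der_on A = derange #|A|.
Proof. exact: der_inv_aux (ltnSn _). Qed.

Lemma D_ident N : \sum_(0 <= k < N.+1) 'C(N, k) * derange (N - k) = N`!.
Proof.
have -> : N`! = #|[set: 'I_N]|`! by rewrite cardsT card_ord.
rewrite fact_decomp.
under [in RHS]eq_bigr do rewrite der_inv.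
rewrite sum_subsets cardsT card_ord.
rewrite big_nat_rev big_mkord /=.
apply: eq_bigr => k _; rewrite add0n subSS subKn ?bin_sub //; rewrite -ltnS //.
Qed.

Lemma falling_ident j n : j <= n ->
  \sum_(0 <= k < n.+1) k ^_ j * ('C(n, k) * derange (n - k)) = n`!.
Proof.
elim: j n => [|j IH] n hjn.
  by rewrite -D_ident; apply: eq_bigr => k _; rewrite ffactn0 mul1n.
case: n hjn => [//|n] hjn.
rewrite big_nat_recl // ffact0n add0n factS -(IH n hjn) big_distrr /=.
apply: eq_bigr => k _.
rewrite ffactSS subSS.
have := mul_bin_diag n.+1 k; rewrite /= => h.
rewrite [RHS]mulnCA (mulnA n.+1 'C(n, k)) h.
by rewrite !mulnA (mulnC k.+1).
Qed.

Section Ker.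
Variables (T K : finType) (P : {set {set T}}).
Hypothesis hP : partition P [set: T].

Lemma covP x : x \in cover P.
Proof. by case/and3P: hP => /eqP -> _ _; rewrite inE. Qed.
Lemma tiP : trivIset P.
Proof. by case/and3P: hP. Qed.
Lemma nP0 : set0 \notin P.
Proof. by case/and3P: hP. Qed.

Lemma kerE (f : T -> K) :
  (preim_partition f [set: T] == P) =
  [forall x, forall y, (f x == f y) == (pblock P x == pblock P y)].
Proof.
apply/eqP/forallP => [H x|H].
  apply/forallP => y; apply/eqP.
  rewrite eq_pblock ?covP ?tiP // -H pblock_equivalence_partition ?inE //.
  by split => // /eqP ->.
rewrite -(preim_partition_pblock hP) /preim_partition /equivalence_partition.
apply: eq_in_imset => x _; apply/setP => y; rewrite !inE.
by have /forallP/(_ y)/eqP := H x.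
Qed.

Definition D := {B : {set T} | B \in P}.
Definition blk (x : T) : D := exist _ (pblock P x) (pblock_mem (covP x)).
Definition Psi (g : {ffun D -> K}) : {ffun T -> K} := [ffun x => g (blk x)].

Lemma exB (B : D) : exists x, x \in val B.
Proof.
case: B => B /= PB; apply/set0Pn.
by apply: contraNneq nP0 => <-.
Qed.

Definition rep (B : D) : T := xchoose (exB B).
Lemma repP B : rep B \in val B.
Proof. exact: xchooseP. Qed.

Lemma blk_rep B : blk (rep B) = B.
Proof.
apply: val_inj => /=; have := repP B; case: B => B PB /= h.
exact: def_pblock tiP PB h.
Qed.

Lemma blkE x y : (blk x == blk y) = (pblock P x == pblock P y).
Proof. by rewrite -val_eqE. Qed.

Lemma Psi_inj : injective Psi.
Proof.
move=> g1 g2 /ffunP H; apply/ffunP => B.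
by have := H (rep B); rewrite !ffunE blk_rep.
Qed.

Lemma ker_img :
  [set f : {ffun T -> K} | preim_partition f [set: T] == P] =
  Psi @: [set g : {ffun D -> K} | injectiveb g].
Proof.
apply/setP => f; rewrite inE; apply/idP/imsetP.
  rewrite kerE => /forallP H.
  have Hf x y : (f x == f y) = (pblock P x == pblock P y).
    by have /forallP/(_ y)/eqP := H x.
  exists [ffun B => f (rep B)].
    rewrite inE; apply/injectiveP => B1 B2; rewrite !ffunE => /eqP.
    rewrite Hf -!blkE !blk_rep; exact: eqP.
  apply/ffunP => x; rewrite !ffunE; apply/eqP; rewrite Hf -blkE blk_rep.
  by [].
case=> g; rewrite inE => /injectiveP ig ->.
rewrite kerE; apply/forallP => x; apply/forallP => y; rewrite !ffunE.
by rewrite (inj_eq ig) blkE.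
Qed.

Lemma card_ker :
  #|[set f : {ffun T -> K} | preim_partition f [set: T] == P]| = #|K| ^_ #|P|.
Proof.
rewrite ker_img card_imset; last exact: Psi_inj.
rewrite card_inj_ffuns; congr (_ ^_ _).
by rewrite card_sig; apply: eq_card.
Qed.

Lemma cardP_le : #|P| <= #|T|.
Proof.
rewrite -cardsT (card_partition hP) -sum1_card; apply: leq_sum => B PB.
by rewrite card_gt0; apply: contraNneq nP0 => <-.
Qed.
End Ker.

Lemma pow_part (T K : finType) :
  #|K| ^ #|T| = \sum_(P : {set {set T}} | partition P [set: T]) #|K| ^_ #|P|.
Proof.
rewrite -card_ffun -sum1_card.
rewrite (partition_big (fun f : {ffun T -> K} => preim_partition f [set: T])
           (fun P => partition P [set: T])); last by move=> f _; apply: preim_partitionP.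
apply: eq_bigr => P hP; rewrite -(card_ker K hP) sum1dep_card.
by apply: eq_card => f; rewrite !inE.
Qed.

Lemma moment i n : i <= n ->
  \sum_(0 <= k < n.+1) k ^ i * ('C(n, k) * derange (n - k)) = bell i * n`!.
Proof.
move=> hin.
have E k : k ^ i = \sum_(P : {set {set 'I_i}} | partition P [set: 'I_i]) k ^_ #|P|.
  by have := pow_part 'I_i 'I_k; rewrite !card_ord.
under eq_bigr do rewrite E big_distrl /=.
rewrite exchange_big /= /bell -sum1_card big_distrl /=.
apply: eq_big => [P|P hP]; first by rewrite inE.
rewrite mul1n falling_ident //.
by apply: leq_trans (cardP_le hP) _; rewrite card_ord.
Qed.

Import GRing.Theory Num.Theory.
Local Open Scope ring_scope.

Theorem theorem2 (n m : nat) (g : {poly int}) (hmn : (m <= n)%N)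
  (hg : (size g <= m.+1)%N) :
  \sum_(0 <= k < n.+1) g.[k%:Z] * ('C(n, k) * derange (n - k))%:Z
  = (\sum_(0 <= i < m.+1) g`_i * (bell i)%:Z) * (n`!)%:Z.
Proof.
under eq_bigr do rewrite (horner_coef_wide _ hg) big_distrl /=.
rewrite exchange_big big_mkord big_distrl /=.
apply: eq_bigr => i _.
rewrite -mulrA -PoszM -(moment (leq_trans (ltnSE (ltn_ord i)) hmn)).
rewrite (big_morph Posz PoszD (erefl 0%:Z)) big_distrr /=.
apply: eq_bigr => k _; rewrite -mulrA !PoszM; congr (_ * (_ * _)).
by rewrite -[RHS]natz natrX natz.
Qed.
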